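(* Let $\Delta=(\alpha_1,\dots,\alpha_N)$ be ordered. Let $B\subset{\cal B}(\Delta)$ be the set of bases $b=(\alpha_{i_1},\dots,\alpha_{i_r})$, $i_1<\dots<i_r$, such that for every index $j\notin\{i_1,\dots,i_r\}$ the set $\{\alpha_j\}\cup\{\alpha_{i_p}: i_p>j\}$ is linearly independent. Then $(\phi_b)_{b\in B}$ is a basis of $S_\Delta$. Moreover, consider the space of all linear relations $\sum_{\sigma\in{\cal B}(\Delta)}c_\sigma\phi_\sigma=0$, i.e. the kernel of the map from the free vector space on symbols $[\sigma]$, $\sigma\in{\cal B}(\Delta)$, to $R_\Delta$. This space is spanned by the Orlik–Solomon relations $$r_{\sigma,\alpha}=[\sigma]-\sum_{\beta\in\sigma,\ c_{\alpha\beta}\ne0}c_{\alpha\beta}\,[\sigma\cup\{\alpha\}\setminus\{\beta\}],$$ for $\sigma\in{\cal B}(\Delta)$ and $\alpha\in\Delta\setminus\sigma$, where $\alpha=\sum_{\beta\in\sigma}c_{\alpha\beta}\beta$.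
   Context: Let $k$ be a field of characteristic zero, $V$ a $k$-vector space of dimension $r$, and $V^*$ its dual, with $S(V)$ identified with polynomial functions on $V^*$. Let $\Delta\subset V$ be a finite set of nonzero vectors spanning $V$, and $R_\Delta=\Delta^{-1}S(V)$ (rational functions on $V^*$ with the elements of $\Delta$ inverted). ${\cal B}(\Delta)$ is the set of subsets of $\Delta$ forming a basis of $V$. For $\sigma\in{\cal B}(\Delta)$, $\phi_\sigma=1/\prod_{\alpha\in\sigma}\alpha$. $S_\Delta$ is the $k$-span of the $\phi_\sigma$, $\sigma\in{\cal B}(\Delta)$. Note that for $c_{\alpha\beta}\neq0$, $\sigma\cup\{\alpha\}\setminus\{\beta\}\in{\cal B}(\Delta)$. *)

(* Defs.v *)
From HB Require Import structures.
From mathcomp Require Import all_boot all_order all_algebra.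
From mathcomp Require Import fraction.
From mathcomp Require Import mpoly.
Set Implicit Arguments. Unset Strict Implicit. Unset Printing Implicit Defensive.
Import Order.TTheory GRing.Theory Num.Theory.
Local Open Scope ring_scope.

(* V = k^r, modelled as row vectors 'rV[k]_r.  Delta = (alpha_0, ..., alpha_{N-1})
   is an ordered family alpha : 'I_N -> 'rV[k]_r.  Subsets of Delta are encoded
   by subsets of indices {set 'I_N}. *)

Section Arrangement.
Variables (k : fieldType) (r N : nat) (alpha : 'I_N -> 'rV[k]_r).

Definition vecs_of (s : {set 'I_N}) : 'M[k]_(#|s|, r) :=
  \matrix_(i < #|s|) alpha (enum_val i).

Definition lin_indep (s : {set 'I_N}) : bool := row_free (vecs_of s).

Definition is_basis (s : {set 'I_N}) : bool := lin_indep s && (#|s| == r).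

(* S(V) = polynomial functions on V^*: the vector alpha in V is the linear
   polynomial sum_i alpha_i X_i; R_Delta sits inside the fraction field. *)
Definition linpoly (v : 'rV[k]_r) : {mpoly k[r]} := \sum_(i < r) v 0 i *: 'X_i.

Definition phi (s : {set 'I_N}) : {fraction {mpoly k[r]}} :=
  (@FracField.tofrac _ (\prod_(i in s) linpoly (alpha i)))^-1.

Definition kscal (c : k) : {fraction {mpoly k[r]}} := @FracField.tofrac _ (c%:MP).

(* the map from the free vector space on the symbols [sigma] to R_Delta;
   an element of the free space is a coefficient function on index sets,
   required to be supported on B(Delta) *)
Definition supported_on_bases (c : {ffun {set 'I_N} -> k}) : Prop :=
  forall s, ~~ is_basis s -> c s = 0.

Definition eval_free (c : {ffun {set 'I_N} -> k}) : {fraction {mpoly k[r]}} :=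
  \sum_(s | is_basis s) kscal (c s) * phi s.

Definition good_basis (b : {set 'I_N}) : bool :=
  is_basis b &&
  [forall j, (j \notin b) ==> lin_indep (j |: [set i in b | (j < i)%N])].

(* Orlik-Solomon relation r_{sigma, alpha_j}, where cf : 'I_N -> k is the
   coefficient vector of alpha_j in the basis sigma (alpha_j = sum_{i in sigma} cf i alpha_i) *)
Definition os_rel (s : {set 'I_N}) (j : 'I_N) (cf : 'I_N -> k)
  : {ffun {set 'I_N} -> k} :=
  [ffun t => (t == s)%:R
     - \sum_(i in s | cf i != 0) cf i * (t == j |: (s :\ i))%:R].

End Arrangement.

(* Main.v *)
Require Import Defs.
From HB Require Import structures.
From mathcomp Require Import all_boot all_order all_algebra.
From mathcomp Require Import fraction.
From mathcomp Require Import mpoly.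
From Stdlib Require Import Classical.
Import Order.TTheory GRing.Theory Num.Theory.
Local Open Scope ring_scope.

Set Implicit Arguments. Unset Strict Implicit. Unset Printing Implicit Defensive.



Section LinAlg.
Variables (k : fieldType) (r N : nat) (alpha : 'I_N -> 'rV[k]_r).
Implicit Types (s : {set 'I_N}).

Definition LI (s : {set 'I_N}) := forall c : 'I_N -> k,
  \sum_(i in s) c i *: alpha i = 0 -> forall i, i \in s -> c i = 0.

Lemma vecs_mul (s : {set 'I_N}) (v : 'rV_#|s|) :
  v *m vecs_of alpha s = \sum_(i < #|s|) v 0 i *: alpha (enum_val i).
Proof. by rewrite mulmx_sum_row; apply: eq_bigr => i _; rewrite rowK. Qed.

Lemma lin_indepP s : reflect (LI s) (lin_indep alpha s).
Proof.
apply: (iffP idP) => [fr c Hc i iS|HLI].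
  pose v : 'rV_#|s| := \row_j c (enum_val j).
  have : v *m vecs_of alpha s = 0.
    rewrite vecs_mul; transitivity (\sum_(i in s) c i *: alpha i); last exact Hc.
    rewrite (big_enum_val (fun x => c x *: alpha x)) /=.
    by apply: eq_bigr => j _; rewrite mxE.
  move/eqP; rewrite mulmx_free_eq0 // => /eqP v0.
  have := congr1 (fun w : 'rV_#|s| => w 0 (enum_rank_in iS i)) v0.
  by rewrite !mxE enum_rankK_in.
apply: inj_row_free => v Hv; apply/rowP => j; rewrite mxE.
have xs := enum_valP j.
pose c := fun y => v 0 (enum_rank_in xs y).
have cs : \sum_(i in s) c i *: alpha i = 0.
  transitivity (v *m vecs_of alpha s); last exact Hv.
  rewrite vecs_mul (big_enum_rank xs (fun i => v 0 i *: alpha (enum_val i))).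
  by apply: eq_bigr => y ys; rewrite /c enum_rankK_in.
have := HLI c cs (enum_val j) (enum_valP j).
by rewrite /c enum_valK_in.
Qed.

Lemma LI_sub (t s : {set 'I_N}) : t \subset s -> LI s -> LI t.
Proof.
move=> ts H c Hc i it.
pose c' x := if x \in t then c x else 0.
have E : \sum_(x in s) c' x *: alpha x = \sum_(x in t) c x *: alpha x.
  rewrite [LHS]big_mkcond [RHS]big_mkcond; apply: eq_bigr => x _; rewrite /c'.
  case: (boolP (x \in t)) => xt; first by rewrite (subsetP ts x xt).
  by case: (x \in s); rewrite ?scale0r.
have := H c' (etrans E Hc) i (subsetP ts i it).
by rewrite /c' it.
Qed.

Lemma notLI s : ~ LI s -> exists c, \sum_(i in s) c i *: alpha i = 0 /\
  exists2 i, i \in s & c i != 0.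
Proof.
move=> nL; apply: NNPP => H; apply: nL => c Hc i iS; apply: NNPP => ci.
by apply: H; exists c; split => //; exists i => //; apply/eqP.
Qed.

Lemma LI_uniq s (c d : 'I_N -> k) : LI s -> \sum_(i in s) c i *: alpha i = \sum_(i in s) d i *: alpha i ->
  forall i, i \in s -> c i = d i.
Proof.
move=> H E i iS; apply/eqP; rewrite -subr_eq0; apply/eqP.
apply: (H (fun x => c x - d x) _ i iS).
under eq_bigr do rewrite scalerBl.
by rewrite sumrB E subrr.
Qed.

Lemma exists_coef s (w : 'rV_#|s|) : exists c : 'I_N -> k,
  w *m vecs_of alpha s = \sum_(i in s) c i *: alpha i.
Proof.
case: (pickP (mem s)) => [x xs | s0].
  exists (fun y => w 0 (enum_rank_in xs y)).
  rewrite vecs_mul (big_enum_rank xs (fun i => w 0 i *: alpha (enum_val i))).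
  by apply: eq_bigr => y ys; rewrite enum_rankK_in.
exists (fun _ => 0); rewrite vecs_mul big1 ?big1 // => [y _|i _].
  by rewrite scale0r.
by have := s0 (enum_val i); rewrite /= enum_valP.
Qed.

Lemma basis_span s : is_basis alpha s -> forall v : 'rV_r,
  exists c, v = \sum_(i in s) c i *: alpha i.
Proof.
case/andP => fr cs v.
have full : row_full (vecs_of alpha s).
  by move: fr; rewrite /lin_indep /row_free /row_full => /eqP->.
have /submxP [D ->] := submx_full v full.
exact: exists_coef.
Qed.

Lemma basis_LI s : is_basis alpha s -> LI s.
Proof. by case/andP => /lin_indepP. Qed.

Lemma exchange s j i cf : is_basis alpha s -> j \notin s ->
  alpha j = \sum_(t in s) cf t *: alpha t -> i \in s -> cf i != 0 ->
  is_basis alpha (j |: (s :\ i)).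
Proof.
move=> bs js Hj iS cfi.
have js' : j \notin s :\ i by rewrite in_setD1 (negbTE js) andbF.
apply/andP; split; last first.
  rewrite cardsU1 js' /=; case/andP: bs => _ /eqP <-.
  by rewrite (cardsD1 i s) iS.
apply/lin_indepP => d Hd.
rewrite big_setU1 //= Hj (big_setD1 i iS) /= scalerDr scalerA addrC addrA in Hd.
pose e t := if t == i then d j * cf i else d j * cf t + d t.
have He : \sum_(t in s) e t *: alpha t = 0.
  rewrite -[RHS]Hd (big_setD1 i iS) /= {1}/e eqxx.
  have -> : \sum_(t in s :\ i) e t *: alpha t =
    \sum_(i0 in s :\ i) d i0 *: alpha i0 + d j *: \sum_(i0 in s :\ i) cf i0 *: alpha i0.
    rewrite scaler_sumr -big_split /=; apply: eq_bigr => t.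
    rewrite in_setD1 => /andP [/negbTE ti _].
    by rewrite /e ti scalerA -scalerDl addrC.
  by rewrite addrCA addrA.
have e0 := basis_LI bs He.
have dj : d j = 0.
  by have := e0 i iS; rewrite /e eqxx => /eqP; rewrite mulf_eq0 (negbTE cfi) orbF => /eqP.
move=> t; rewrite in_setU1 => /orP [/eqP -> // | ts'].
have := e0 t; rewrite /e; move: ts'; rewrite in_setD1 => /andP [/negbTE -> ts].
by rewrite dj mul0r add0r => ->.
Qed.

Lemma later s j cf : is_basis alpha s -> j \notin s ->
  alpha j = \sum_(t in s) cf t *: alpha t ->
  ~~ lin_indep alpha (j |: [set t in s | (j < t)%N]) ->
  forall i, i \in s -> cf i != 0 -> (j < i)%N.
Proof.
move=> bs js Hj nli.
set T := [set t in s | (j < t)%N].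
have LT : LI T.
  apply: (LI_sub _ (basis_LI bs)); apply/subsetP => t; rewrite inE => /andP [].
  done.
have jT : j \notin T by rewrite inE (negbTE js).
have nL : ~ LI (j |: T) by move=> H; move/lin_indepP: H; rewrite (negbTE nli).
have [d [Hd [t tT dt]]] := notLI nL.
rewrite big_setU1 //= in Hd.
have dj : d j != 0.
  apply/negP => /eqP dj0; rewrite dj0 scale0r add0r in Hd.
  move: tT; rewrite in_setU1 => /orP [/eqP tj | tT'].
    by move: dt; rewrite tj dj0 eqxx.
  by move: dt; rewrite (LT d Hd t tT') eqxx.
pose e (x : 'I_N) := if (j < x)%N then - (d x / d j) else 0.
have Ee : alpha j = \sum_(t in s) e t *: alpha t.
  apply: (scalerI dj); rewrite scaler_sumr.
  have -> : d j *: alpha j = - \sum_(i in T) d i *: alpha i.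
    by apply/eqP; rewrite -addr_eq0 Hd.
  rewrite -sumrN big_mkcond [RHS]big_mkcond /=; apply: eq_bigr => x _.
  rewrite /T inE /e; case: (x \in s) => //=; case: (j < x)%N => /=.
    by rewrite scalerA mulrN mulrC divfK // scaleNr.
  by rewrite scale0r scaler0.
move=> i iS cfi.
have := LI_uniq (basis_LI bs) (etrans (esym Hj) Ee) iS.
rewrite /e; case: (j < i)%N => // ci.
by move: cfi; rewrite ci eqxx.
Qed.

End LinAlg.



Section Lin.
Variables (k : fieldType) (r : nat).
Implicit Types (u v : 'rV[k]_r).

Lemma linpolyD u v : linpoly (u + v) = linpoly u + linpoly v.
Proof. by rewrite /linpoly -big_split; apply: eq_bigr => i _; rewrite mxE scalerDl. Qed.

Lemma linpolyZ c v : linpoly (c *: v) = c *: linpoly v.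
Proof. by rewrite /linpoly scaler_sumr; apply: eq_bigr => i _; rewrite mxE scalerA. Qed.

Lemma linpoly0 : linpoly (0 : 'rV[k]_r) = 0.
Proof. by rewrite /linpoly big1 // => i _; rewrite mxE scale0r. Qed.

Lemma linpoly_sum (I : finType) (P : pred I) (F : I -> 'rV[k]_r) :
  linpoly (\sum_(i | P i) F i) = \sum_(i | P i) linpoly (F i).
Proof. exact: (big_morph _ linpolyD linpoly0). Qed.

Lemma linpoly_coef v i : (linpoly v)@_U_(i) = v 0 i.
Proof.
rewrite /linpoly raddf_sum (bigD1 i) //= mcoeffZ mcoeffXU eqxx mulr1 big1 ?addr0 //.
by move=> j /negbTE ji; rewrite mcoeffZ mcoeffXU ji mulr0.
Qed.

Lemma linpoly_eq0 v : (linpoly v == 0) = (v == 0).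
Proof.
apply/eqP/eqP => [H|->]; last exact: linpoly0.
apply/rowP => i; rewrite -linpoly_coef H mxE.
exact: mcoeff0.
Qed.

End Lin.

Lemma linpoly_comp (k : fieldType) (r r' : nat) (P : 'M[k]_(r, r')) (v : 'rV[k]_r) :
  linpoly v \mPo [tuple linpoly (row i P) | i < r] = linpoly (v *m P).
Proof.
have -> : linpoly v = \sum_i v 0 i *: 'X_i by [].
set lq := [tuple _ | i < r].
rewrite (big_morph (comp_mpoly lq) (comp_mpolyD lq) (comp_mpoly0 lq)).
rewrite mulmx_sum_row linpoly_sum; apply: eq_bigr => i _.
by rewrite comp_mpolyZ comp_mpolyXU -tnth_nth tnth_mktuple linpolyZ.
Qed.



Definition Qp (k : fieldType) (r N : nat) (alpha : 'I_N -> 'rV[k]_r) (b : {set 'I_N}) :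
  {mpoly k[r]} := \prod_(i in ~: b) linpoly (alpha i).

Section Step.
Variables (k : fieldType) (N' r : nat) (alpha : 'I_N'.+1 -> 'rV[k]_r).
Local Notation mx := (@ord_max N').
Local Notation lf := (lift mx).
Definition W (t : {set 'I_N'}) : {set 'I_N'.+1} := lf @: t.
Definition pre (b : {set 'I_N'.+1}) : {set 'I_N'} := [set j | lf j \in b].
Definition alpha' (j : 'I_N') := alpha (lf j).
Let a := alpha mx.
Implicit Types (b : {set ordinal N'.+1}) (t : {set ordinal N'}).

Lemma memW j t : (lf j \in W t) = (j \in t).
Proof. by rewrite mem_imset //; exact: lift_inj. Qed.

Lemma maxW t : mx \notin W t.
Proof. by apply/imsetP => [[j _ /eqP]]; rewrite (negbTE (neq_lift _ _)). Qed.

Lemma preW t : pre (W t) = t.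
Proof. by apply/setP => j; rewrite inE memW. Qed.

Lemma preMW t : pre (mx |: W t) = t.
Proof. by apply/setP => j; rewrite !inE memW eq_sym (negbTE (neq_lift _ _)). Qed.

Lemma Wpre b : mx \notin b -> W (pre b) = b.
Proof.
move=> mb; apply/setP => i; case: (unliftP mx i) => [j ->|->].
  by rewrite memW inE.
by rewrite (negbTE (maxW _)) (negbTE mb).
Qed.

Lemma MWpre b : mx \in b -> mx |: W (pre b) = b.
Proof.
move=> mb; apply/setP => i; rewrite in_setU1; case: (unliftP mx i) => [j ->|->].
  by rewrite memW inE eq_sym (negbTE (neq_lift _ _)).
by rewrite eqxx mb.
Qed.

Lemma sumW (V : nmodType) (F : 'I_N'.+1 -> V) t :
  \sum_(i in W t) F i = \sum_(j in t) F (lf j).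
Proof. by rewrite big_imset //; move=> x y _ _; exact: lift_inj. Qed.

Lemma sumMW (V : nmodType) (F : 'I_N'.+1 -> V) t :
  \sum_(i in mx |: W t) F i = F mx + \sum_(j in t) F (lf j).
Proof. by rewrite big_setU1 ?maxW //= sumW. Qed.

Definition ext (d : k) (c : 'I_N' -> k) (x : 'I_N'.+1) : k :=
  if unlift mx x is Some j then c j else d.

Lemma ext_lift d c j : ext d c (lf j) = c j.
Proof. by rewrite /ext liftK. Qed.

Lemma ext_max d c : ext d c mx = d.
Proof. by rewrite /ext unlift_none. Qed.

Lemma LI_W t : LI alpha (W t) <-> LI alpha' t.
Proof.
split => H c Hc.
  move=> j jt; have := H (ext 0 c) _ (lf j); rewrite ext_lift memW; apply => //.
  by rewrite sumW; under eq_bigr do rewrite ext_lift.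
move=> i /imsetP [j jt ->]; apply: (H (fun j => c (lf j))) => //.
by move: Hc; rewrite sumW.
Qed.

Lemma lift_lt j0 i0 : (lf j0 < lf i0)%N = (j0 < i0)%N.
Proof. by rewrite !lift_max. Qed.

Lemma lift_lt_max j0 : (lf j0 < mx)%N.
Proof. by rewrite lift_max /= ltn_ord. Qed.

Lemma max_lt (i : 'I_N'.+1) : (mx < i)%N = false.
Proof. by apply/negbTE; rewrite -leqNgt -ltnS ltn_ord. Qed.

Lemma WU1 j t : lf j |: W t = W (j |: t).
Proof. by rewrite /W imsetU1. Qed.

Lemma S1 t j0 : [set i in W t | (lf j0 < i)%N] = W [set i in t | (j0 < i)%N].
Proof.
apply/setP => i; case: (unliftP mx i) => [i0 ->|->].
  by rewrite inE !memW inE lift_lt.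
by rewrite inE (negbTE (maxW _)) (negbTE (maxW _)).
Qed.

Lemma S2 t j0 : [set i in mx |: W t | (lf j0 < i)%N] = mx |: W [set i in t | (j0 < i)%N].
Proof.
apply/setP => i; case: (unliftP mx i) => [i0 ->|->].
  by rewrite inE !in_setU1 !memW inE lift_lt eq_sym (negbTE (neq_lift _ _)).
by rewrite inE !in_setU1 eqxx lift_lt_max.
Qed.

Lemma S3 t : [set i in W t | (mx < i)%N] = set0.
Proof. by apply/setP => i; rewrite inE max_lt andbF inE. Qed.

Lemma forall_split (p : pred 'I_N'.+1) : [forall j, p j] = p mx && [forall j0, p (lf j0)].
Proof.
apply/forallP/andP => [H|[H1 /forallP H2] i].
  by split => //; apply/forallP => j0; exact: H.
by case: (unliftP mx i) => [j ->|->].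
Qed.

Lemma lift_widen j : widen_ord (leqnSn N') j = lf j.
Proof. by apply: val_inj; rewrite /= /bump leqNgt ltn_ord. Qed.

Lemma prodC_split (R : comRingType) (F : 'I_N'.+1 -> R) b :
  \prod_(i in ~: b) F i = (\prod_(j in ~: pre b) F (lf j)) * (if mx \in b then 1 else F mx).
Proof.
rewrite big_mkcond big_ord_recr /=; congr (_ * _).
  by rewrite [RHS]big_mkcond; apply: eq_bigr => j _; rewrite lift_widen !inE.
by rewrite inE; case: (mx \in b).
Qed.

Lemma QW t : Qp alpha (W t) = Qp alpha' t * linpoly a.
Proof. by rewrite /Qp prodC_split preW (negbTE (maxW t)). Qed.

Lemma QMW t : Qp alpha (mx |: W t) = Qp alpha' t.
Proof. by rewrite /Qp prodC_split preMW setU11 mulr1. Qed.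

Lemma LI_single : a != 0 -> LI alpha [set mx].
Proof.
move=> an c; rewrite big_set1 => /eqP; rewrite scaler_eq0 (negbTE an) orbF => /eqP H i.
by rewrite inE => /eqP ->.
Qed.

Lemma goodW t : a != 0 -> good_basis alpha (W t) = good_basis alpha' t.
Proof.
move=> an.
have LIeq X : lin_indep alpha (W X) = lin_indep alpha' X.
  apply/idP/idP => /lin_indepP H; apply/lin_indepP; [exact: (proj1 (LI_W X) H) | exact: (proj2 (LI_W X) H)].
rewrite /good_basis /is_basis card_imset; last exact: lift_inj.
rewrite LIeq forall_split (negbTE (maxW _)) S3 setU0.
have -> : lin_indep alpha [set mx] by apply/lin_indepP; exact: LI_single.
congr (_ && _); apply: eq_forallb => j0.
by rewrite memW S1 WU1 LIeq.
Qed.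

Variables (r'' : nat) (P : 'M[k]_(r, r'')).
Hypothesis an0 : a != 0.
Hypothesis HK : forall v : 'rV_r, v *m P = 0 <-> exists e, v = e *: a.
Definition alpha'' (j : 'I_N') := alpha' j *m P.

Lemma LI_MW t : LI alpha (mx |: W t) <-> LI alpha'' t.
Proof.
split => H c Hc.
  have [e He] : exists e, \sum_(j in t) c j *: alpha' j = e *: a.
    apply/HK; rewrite mulmx_suml -[RHS]Hc; apply: eq_bigr => j _.
    by rewrite -scalemxAl.
  move=> j jt; have := H (ext (- e) c) _ (lf j); rewrite ext_lift; apply.
    by rewrite sumMW ext_max; under eq_bigr do rewrite ext_lift;
       rewrite [X in _ + X]He scaleNr addNr.
  by rewrite in_setU1 memW jt orbT.
have E : c mx *: a + \sum_(j in t) c (lf j) *: alpha' j = 0 by move: Hc; rewrite sumMW.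
have aP : a *m P = 0 by apply/HK; exists 1; rewrite scale1r.
have E2 : \sum_(j in t) c (lf j) *: alpha'' j = 0.
  transitivity ((c mx *: a + \sum_(j in t) c (lf j) *: alpha' j) *m P); last by rewrite E mul0mx.
  rewrite mulmxDl -scalemxAl aP scaler0 add0r mulmx_suml.
  by apply: eq_bigr => j _; rewrite /alpha'' scalemxAl.
have Z := H _ E2.
have Z2 : \sum_(j in t) c (lf j) *: alpha' j = 0.
  by apply: big1 => j jt; rewrite Z // scale0r.
rewrite Z2 addr0 in E.
move=> i; rewrite in_setU1 => /orP [/eqP -> | /imsetP [j jt ->]]; last exact: Z.
by move/eqP: E; rewrite scaler_eq0 (negbTE an0) orbF => /eqP.
Qed.

Hypothesis Hr : r = r''.+1.

Lemma goodMW t : good_basis alpha (mx |: W t) = good_basis alpha'' t.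
Proof.
have LIeq X : lin_indep alpha (mx |: W X) = lin_indep alpha'' X.
  apply/idP/idP => /lin_indepP H; apply/lin_indepP; [exact: (proj1 (LI_MW X) H) | exact: (proj2 (LI_MW X) H)].
rewrite /good_basis /is_basis cardsU1 maxW card_imset; last exact: lift_inj.
have -> : ((true + #|t|)%N == r) = (#|t| == r'') by rewrite Hr.
rewrite LIeq forall_split setU11 /=.
congr (_ && _); apply: eq_forallb => j0.
rewrite in_setU1 eq_sym (negbTE (neq_lift _ _)) memW /= S2.
by rewrite setUCA WU1 LIeq.
Qed.
End Step.



Lemma contraction (k : fieldType) (r : nat) (a : 'rV[k]_r) : a != 0 ->
  exists r'' (P : 'M[k]_(r, r'')), r = r''.+1 /\
    forall v : 'rV_r, v *m P = 0 <-> exists e, v = e *: a.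
Proof.
move=> an; exists (\rank (cokermx a)), (col_base (cokermx a)); split.
  rewrite mxrank_coker rank_rV an /=.
  have := rank_leq_col a; rewrite rank_rV an => h.
  by rewrite subn1 prednK.
have E v : (v *m col_base (cokermx a) == 0) = (v <= a)%MS.
  by rewrite -(mulmx_free_eq0 _ (row_base_free (cokermx a))) -mulmxA mulmx_base submxE.
move=> v; split.
  move=> /eqP; rewrite E => /submxP [D ->]; exists (D 0 0).
  by rewrite {1}(mx11_scalar D) mul_scalar_mx.
case=> e ->.
by apply/eqP; rewrite E scalemx_sub // submx_refl.
Qed.

Lemma zero_not_LI (k : fieldType) (r N : nat) (alpha : 'I_N -> 'rV[k]_r) j (s : {set 'I_N}) :
  alpha j = 0 -> j \in s -> ~ LI alpha s.
Proof.
move=> a0 js H.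
have h := H (fun x => (x == j)%:R) _ j js; rewrite eqxx in h.
suff /h /eqP : \sum_(i in s) (i == j)%:R *: alpha i = 0 by rewrite oner_eq0.
rewrite (bigD1 j js) /= eqxx scale1r a0 add0r big1 // => i /andP [_ /negbTE ->].
by rewrite scale0r.
Qed.

Theorem indep_poly (k : fieldType) (N : nat) : forall r (alpha : 'I_N -> 'rV[k]_r)
  (c : {set 'I_N} -> k),
  \sum_(b | good_basis alpha b) c b *: Qp alpha b = 0 ->
  forall b, good_basis alpha b -> c b = 0.
Proof.
elim: N => [|N' IH] r alpha c Hs b gb.
  have all0 : forall b' : {set 'I_0}, b' = b by move=> b'; apply/setP => -[].
  rewrite (bigD1 b gb) big1 /= ?addr0 in Hs; last first.
    by move=> b' /andP [_]; rewrite (all0 b') eqxx.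
  have Q1 : Qp alpha b = 1 by rewrite /Qp big1 // => -[].
  by move/eqP: Hs; rewrite Q1 scaler_eq0 oner_eq0 orbF => /eqP.
case: (eqVneq (alpha ord_max) 0) => [a0|an].
  exfalso; case/andP: gb => /andP [/lin_indepP Lb _] /forallP Hf.
  case: (boolP (ord_max \in b)) => mb; first exact: zero_not_LI a0 mb Lb.
  have := Hf ord_max; rewrite mb /= => /lin_indepP.
  by apply: zero_not_LI a0 _; rewrite setU11.
have [r'' [P [Hr HK]]] := contraction an.
have gMW := goodMW an HK Hr.
have Hsplit : \sum_(b | good_basis alpha b) c b *: Qp alpha b =
   \sum_(t | good_basis (alpha' alpha) t) c (W t) *: (Qp (alpha' alpha) t * linpoly (alpha ord_max))
 + \sum_(t | good_basis (alpha'' alpha P) t) c (ord_max |: W t) *: Qp (alpha' alpha) t.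
  rewrite (bigID (fun b0 : {set ordinal N'.+1} => ord_max \in b0)) /= addrC; congr (_ + _).
    rewrite (reindex_onto (@W N') (@pre N')) /=; last first.
      by move=> b' /andP [_ mb]; exact: Wpre.
    apply: eq_big => t; last by rewrite QW.
    by rewrite preW eqxx andbT maxW andbT goodW.
  rewrite (reindex_onto (fun t => ord_max |: W t) (@pre N')) /=; last first.
    by move=> b' /andP [_ mb]; exact: MWpre.
  apply: eq_big => t; last by rewrite QMW.
  by rewrite preMW eqxx andbT setU11 andbT gMW.
rewrite Hsplit in Hs.
set lq := [tuple linpoly (row i P) | i < r].
have Qcomp t : Qp (alpha' alpha) t \mPo lq = Qp (alpha'' alpha P) t.
  by rewrite /Qp rmorph_prod; apply: eq_bigr => i _; exact: linpoly_comp.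
have aP : alpha ord_max *m P = 0 by apply/HK; exists 1; rewrite scale1r.
have H1 : \sum_(t | good_basis (alpha'' alpha P) t)
            c (ord_max |: W t) *: Qp (alpha'' alpha P) t = 0.
  have := congr1 (comp_mpoly lq) Hs; rewrite comp_mpoly0 comp_mpolyD.
  rewrite !(big_morph (comp_mpoly lq) (comp_mpolyD lq) (comp_mpoly0 lq)).
  rewrite big1 ?add0r => [E|t _]; last first.
    by rewrite comp_mpolyZ rmorphM /= linpoly_comp aP linpoly0 mulr0 scaler0.
  by rewrite -[RHS]E; apply: eq_bigr => t _; rewrite comp_mpolyZ Qcomp.
have Z1 := IH _ _ _ H1.
have H0 : linpoly (alpha ord_max) *
    \sum_(t | good_basis (alpha' alpha) t) c (W t) *: Qp (alpha' alpha) t = 0.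
  rewrite [X in _ + X]big1 ?addr0 in Hs; last first.
    by move=> t gt; rewrite Z1 // scale0r.
  apply: etrans Hs; rewrite mulr_sumr; apply: eq_bigr => t _.
  by rewrite -scalerAr mulrC.
move/eqP: H0; rewrite mulf_eq0 linpoly_eq0 (negbTE an) /= => /eqP H0.
have Z0 := IH _ _ _ H0.
case: (boolP (ord_max \in b)) => mb.
  by rewrite -(MWpre mb); apply: Z1; rewrite -gMW MWpre.
by rewrite -(Wpre mb); apply: Z0; rewrite -goodW // Wpre.
Qed.



Section Frac.
Variables (k : fieldType) (r N : nat) (alpha : 'I_N -> 'rV[k]_r).
Hypothesis nz : forall i, alpha i != 0.
Local Notation F := {fraction {mpoly k[r]}}.
Implicit Types (x y : k) (s u : {set 'I_N}) (f g : {set 'I_N} -> k).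
Local Notation tf := (@FracField.tofrac _).

Definition ell i : F := tf (linpoly (alpha i)).

Lemma ell_neq0 i : ell i != 0.
Proof. by rewrite /ell tofrac_eq0 linpoly_eq0. Qed.

Lemma phiE s : phi alpha s = (\prod_(i in s) ell i)^-1.
Proof. by rewrite /phi rmorph_prod. Qed.

Lemma prod_ell_neq0 (P : pred 'I_N) : \prod_(i | P i) ell i != 0.
Proof. by apply/prodf_neq0 => i _; exact: ell_neq0. Qed.

Lemma kscalD x y : kscal r (x + y) = kscal r x + kscal r y.
Proof. by rewrite /kscal mpolyCD tofracD. Qed.
Lemma kscalM x y : kscal r (x * y) = kscal r x * kscal r y.
Proof. by rewrite /kscal mpolyCM tofracM. Qed.
Lemma kscal0 : kscal r (0 : k) = 0.
Proof. by rewrite /kscal mpolyC0 tofrac0. Qed.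
Lemma kscal1 : kscal r (1 : k) = 1.
Proof. by rewrite /kscal mpolyC1 tofrac1. Qed.
Lemma kscalN x : kscal r (- x) = - kscal r x.
Proof. by rewrite /kscal mpolyCN tofracN. Qed.
Lemma kscal_sum (I : finType) (P : pred I) (G : I -> k) :
  kscal r (\sum_(i | P i) G i) = \sum_(i | P i) kscal r (G i).
Proof. exact: (big_morph _ kscalD kscal0). Qed.
Lemma kscal_nat b : kscal r (b%:R : k) = (b%:R).
Proof. by rewrite /kscal mpolyC_nat rmorph_nat. Qed.

Lemma frac_indep (c : {set 'I_N} -> k) :
  \sum_(b | good_basis alpha b) kscal r (c b) * phi alpha b = 0 ->
  forall b, good_basis alpha b -> c b = 0.
Proof.
move=> H; apply: indep_poly.
apply/eqP; rewrite -tofrac_eq0; apply/eqP.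
have D b : tf (Qp alpha b) = (\prod_i ell i) * phi alpha b.
  rewrite /Qp phiE rmorph_prod (bigID (mem b) predT) /= [X in X * _]mulrC mulfK ?prod_ell_neq0 //.
  by apply: eq_bigl => i; rewrite in_setC.
rewrite rmorph_sum /=.
transitivity (\sum_(b | good_basis alpha b) (\prod_i ell i) * (kscal r (c b) * phi alpha b)).
  by apply: eq_bigr => b _; rewrite -mul_mpolyC tofracM D mulrCA.
by rewrite -mulr_sumr H mulr0.
Qed.

Definition ev (f : {set 'I_N} -> k) : F :=
  \sum_(s | is_basis alpha s) kscal r (f s) * phi alpha s.

Lemma ev_ext f g : f =1 g -> ev f = ev g.
Proof. by move=> E; apply: eq_bigr => s _; rewrite E. Qed.

Lemma evD f g : ev (fun t => f t + g t) = ev f + ev g.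
Proof. by rewrite /ev -big_split; apply: eq_bigr => s _; rewrite kscalD mulrDl. Qed.

Lemma evB f g : ev (fun t => f t - g t) = ev f - ev g.
Proof.
by rewrite /ev -sumrB; apply: eq_bigr => s _; rewrite kscalD kscalN mulrBl.
Qed.

Lemma evZ x f : ev (fun t => x * f t) = kscal r x * ev f.
Proof. by rewrite /ev mulr_sumr; apply: eq_bigr => s _; rewrite kscalM mulrA. Qed.

Lemma ev_sum (I : finType) (P : pred I) (G : I -> {set 'I_N} -> k) :
  ev (fun t => \sum_(i | P i) G i t) = \sum_(i | P i) ev (G i).
Proof.
rewrite /ev; under eq_bigr do rewrite kscal_sum mulr_suml.
exact: exchange_big.
Qed.

Lemma ev_delta u : is_basis alpha u -> ev (fun t => (t == u)%:R) = phi alpha u.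
Proof.
move=> bu; rewrite /ev (bigD1 u) //= eqxx kscal1 mul1r big1 ?addr0 //.
by move=> t /andP [_ /negbTE ->]; rewrite kscal0 mul0r.
Qed.

Lemma phi_ex s j i : j \notin s -> i \in s ->
  phi alpha (j |: (s :\ i)) = ell i * phi alpha s / ell j.
Proof.
move=> js iS.
have js' : j \notin s :\ i by rewrite in_setD1 (negbTE js) andbF.
rewrite !phiE big_setU1 //= (big_setD1 i iS) /= !invfM.
by rewrite mulrA mulfV ?ell_neq0 // mul1r mulrC.
Qed.

Variable cf : {set 'I_N} -> 'I_N -> 'I_N -> k.
Hypothesis Hcf : forall s j, is_basis alpha s -> j \notin s ->
     alpha j = \sum_(i in s) cf s j i *: alpha i.

Lemma os_supp s j : is_basis alpha s -> j \notin s ->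
  supported_on_bases alpha (os_rel s j (cf s j)).
Proof.
move=> bs js t nt; rewrite ffunE.
have -> : (t == s) = false by apply/eqP => ts; move: nt; rewrite ts bs.
rewrite sub0r big1 ?oppr0 // => i /andP [iS ci].
have bi := exchange bs js (Hcf bs js) iS ci.
have -> : (t == j |: (s :\ i)) = false by apply/eqP => ts; move: nt; rewrite ts bi.
by rewrite mulr0.
Qed.

Lemma os_ev s j : is_basis alpha s -> j \notin s ->
  eval_free alpha (os_rel s j (cf s j)) = 0.
Proof.
move=> bs js; set cfv := cf s j.
have -> : eval_free alpha (os_rel s j cfv) = ev (fun t => (t == s)%:R -
     \sum_(i | (i \in s) && (cfv i != 0)) cfv i * (t == j |: (s :\ i))%:R).
  by apply: ev_ext => t; rewrite ffunE.
rewrite evB ev_delta // ev_sum.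
rewrite (eq_bigr (fun i => kscal r (cfv i) * (ell i * phi alpha s / ell j))); last first.
  move=> i /andP [iS ci]; rewrite evZ ev_delta ?phi_ex //.
  exact: exchange bs js (Hcf bs js) iS ci.
rewrite big_mkcondr /=.
rewrite (eq_bigr (fun i => (kscal r (cfv i) * ell i) * (phi alpha s / ell j))); last first.
  move=> i _; case: eqP => [->|_]; first by rewrite kscal0 !mul0r.
  by rewrite !mulrA.
rewrite -mulr_suml.
have -> : \sum_(i in s) kscal r (cfv i) * ell i = ell j.
  rewrite /ell (Hcf bs js) linpoly_sum rmorph_sum; apply: eq_bigr => i _.
  by rewrite linpolyZ -mul_mpolyC rmorphM.
by rewrite mulrCA mulfV ?ell_neq0 // mulr1 subrr.
Qed.

Definition G (g : {set 'I_N} -> k) (d : {set 'I_N} -> 'I_N -> k) t : k :=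
  \sum_(b | good_basis alpha b) g b * (t == b)%:R +
  \sum_(s | is_basis alpha s) \sum_(j | j \notin s) d s j * os_rel s j (cf s j) t.

Definition RepF (f : {ffun {set 'I_N} -> k}) :=
  exists g d, forall t, f t = G g d t.

Lemma Rep0 : RepF 0.
Proof.
exists (fun _ => 0), (fun _ _ => 0) => t; rewrite ffunE /G big1 ?add0r.
  by rewrite big1 // => s _; rewrite big1 // => j _; rewrite mul0r.
by move=> b _; rewrite mul0r.
Qed.

Lemma RepD (f1 f2 : {ffun {set 'I_N} -> k}) : RepF f1 -> RepF f2 -> RepF (f1 + f2).
Proof.
move=> [g1 [d1 H1]] [g2 [d2 H2]].
exists (fun b => g1 b + g2 b), (fun s j => d1 s j + d2 s j) => t.
rewrite ffunE H1 H2 /G.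
have -> : \sum_(b | good_basis alpha b) (g1 b + g2 b) * (t == b)%:R =
  \sum_(b | good_basis alpha b) g1 b * (t == b)%:R +
  \sum_(b | good_basis alpha b) g2 b * (t == b)%:R.
  by rewrite -big_split; apply: eq_bigr => b _; rewrite mulrDl.
have -> : \sum_(s | is_basis alpha s) \sum_(j | j \notin s)
     (d1 s j + d2 s j) * os_rel s j (cf s j) t =
  \sum_(s | is_basis alpha s) \sum_(j | j \notin s) d1 s j * os_rel s j (cf s j) t +
  \sum_(s | is_basis alpha s) \sum_(j | j \notin s) d2 s j * os_rel s j (cf s j) t.
  rewrite -big_split; apply: eq_bigr => s _.
  by rewrite -big_split; apply: eq_bigr => j _; rewrite mulrDl.
by rewrite addrACA.
Qed.

Lemma RepZ x (f : {ffun {set 'I_N} -> k}) : RepF f -> RepF [ffun t => x * f t].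
Proof.
move=> [g [d H]]; exists (fun b => x * g b), (fun s j => x * d s j) => t.
rewrite ffunE H /G mulrDr !mulr_sumr; congr (_ + _).
  by apply: eq_bigr => b _; rewrite mulrA.
apply: eq_bigr => s _; rewrite mulr_sumr.
by apply: eq_bigr => j _; rewrite mulrA.
Qed.

Lemma RepSum (I : finType) (P : pred I) (x : I -> k) (Fs : I -> {ffun {set 'I_N} -> k}) :
  (forall i, P i -> RepF (Fs i)) ->
  RepF (\sum_(i | P i) [ffun t => x i * Fs i t]).
Proof.
move=> H; apply: (big_ind RepF Rep0 RepD) => i Pi.
exact: RepZ (H i Pi).
Qed.

Definition e u : {ffun {set 'I_N} -> k} := [ffun t => (t == u)%:R].

Definition weight u : nat := (\sum_(i in u) (i : nat))%N.

Lemma Rep_os s j : is_basis alpha s -> j \notin s -> RepF (os_rel s j (cf s j)).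
Proof.
move=> bs js; exists (fun _ => 0), (fun s' j' => ((s' == s) && (j' == j))%:R) => t.
rewrite /G big1 ?add0r; last by move=> b _; rewrite mul0r.
rewrite (bigD1 s bs) /= [X in _ + X]big1 ?addr0; last first.
  move=> s' /andP [_ /negbTE ->]; rewrite big1 // => j' _; by rewrite mul0r.
rewrite (bigD1 j js) /= !eqxx mul1r big1 ?addr0 //.
by move=> j' /andP [_ /negbTE ->]; rewrite andbF mul0r.
Qed.

Lemma span_e u : is_basis alpha u -> RepF (e u).
Proof.
have [n] := ubnP (weight u); elim: n u => // n IHn u wu bu.
case: (boolP (good_basis alpha u)) => gu.
  exists (fun b => (b == u)%:R), (fun _ _ => 0) => t.
  rewrite ffunE /G [X in _ + X]big1 ?addr0; last first.
    by move=> s _; rewrite big1 // => j _; rewrite mul0r.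
  rewrite (bigD1 u gu) /= eqxx mul1r big1 ?addr0 //.
  by move=> b /andP [_ /negbTE ->]; rewrite mul0r.
move: gu; rewrite /good_basis bu /= => /forallPn [j]; rewrite negb_imply => /andP [ju nli].
set cfv := cf u j.
have Hj := Hcf bu ju.
have -> : e u = os_rel u j cfv +
   \sum_(i | (i \in u) && (cfv i != 0)) [ffun t => cfv i * e (j |: (u :\ i)) t].
  apply/ffunP => t; rewrite !ffunE sum_ffunE.
  under [X in _ = _ + X]eq_bigr do rewrite !ffunE.
  by rewrite subrK.
apply: RepD; first exact: Rep_os.
apply: RepSum => i /andP [iS ci].
apply: IHn; last exact: exchange bu ju Hj iS ci.
have ji := later bu ju Hj nli iS ci.
have ju' : j \notin u :\ i by rewrite in_setD1 (negbTE ju) andbF.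
move: wu; rewrite /weight big_setU1 //= (big_setD1 i iS) /=.
move=> h; rewrite -ltnS; apply: leq_trans h; rewrite ltnS.
by rewrite ltn_add2r.
Qed.

Lemma evG g d : ev (G g d) = \sum_(b | good_basis alpha b) kscal r (g b) * phi alpha b.
Proof.
rewrite /G evD ev_sum.
have -> : ev (fun t => \sum_(s | is_basis alpha s) \sum_(j | j \notin s)
    d s j * os_rel s j (cf s j) t) = 0.
  rewrite ev_sum big1 // => s bs; rewrite ev_sum big1 // => j js.
  rewrite evZ; have -> : ev (fun t => os_rel s j (cf s j) t) = 0 by exact: os_ev.
  by rewrite mulr0.
rewrite addr0; apply: eq_bigr => b gb.
by rewrite evZ ev_delta //; case/andP: gb.
Qed.
End Frac.

Unset Implicit Arguments.
Set Strict Implicit.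


Theorem mainTheorem9 (k : fieldType) (r N : nat) (alpha : 'I_N -> 'rV[k]_r)
  (cf : {set 'I_N} -> 'I_N -> 'I_N -> k) :
  [pchar k] =i pred0 ->
  (forall i, alpha i != 0) ->
  injective alpha ->
  \rank (\matrix_(i < N) alpha i) = r ->
  (* cf s j = coefficients of alpha_j in the basis s *)
  (forall s j, is_basis alpha s -> j \notin s ->
     alpha j = \sum_(i in s) cf s j i *: alpha i) ->
  (* (phi_b)_{b in B} is a basis of S_Delta *)
  ((forall c : {set 'I_N} -> k,
      \sum_(b | good_basis alpha b) kscal r (c b) * phi alpha b = 0 ->
      forall b, good_basis alpha b -> c b = 0)
   /\
   (forall s, is_basis alpha s ->
      exists c : {set 'I_N} -> k,
        phi alpha s = \sum_(b | good_basis alpha b) kscal r (c b) * phi alpha b))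
  /\
  (* the relation space is spanned by the Orlik-Solomon relations *)
  ((forall s j, is_basis alpha s -> j \notin s ->
      supported_on_bases alpha (os_rel s j (cf s j)) /\
      eval_free alpha (os_rel s j (cf s j)) = 0)
   /\
   (forall c : {ffun {set 'I_N} -> k},
      supported_on_bases alpha c -> eval_free alpha c = 0 ->
      exists d : {set 'I_N} -> 'I_N -> k,
        forall t, c t = \sum_(s | is_basis alpha s) \sum_(j | j \notin s)
               d s j * os_rel s j (cf s j) t)).
Proof.
move=> _ nz _ _ Hcf.
split; [split|split].
- by move=> c H b gb; exact: (frac_indep nz H gb).
- move=> s bs; have [g [d Hgd]] := span_e Hcf bs; exists g.
  rewrite -(evG nz Hcf g d) -(ev_delta bs); apply: ev_ext => t.
  by rewrite -Hgd ffunE.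
- by move=> s j bs js; split; [exact: os_supp | exact: os_ev].
move=> c sc ec.
have Rc : RepF alpha cf c.
  have -> : c = \sum_(t | is_basis alpha t) [ffun u => c t * e k t u].
    apply/ffunP => u; rewrite sum_ffunE; case: (boolP (is_basis alpha u)) => bu.
      rewrite (bigD1 u bu) /= !ffunE eqxx mulr1 big1 ?addr0 // => t /andP [_ tu].
      by rewrite !ffunE eq_sym (negbTE tu) mulr0.
    rewrite sc // big1 // => t bt; rewrite !ffunE.
    have -> : (u == t) = false by apply/eqP => ut; move: bu; rewrite ut bt.
    by rewrite mulr0.
  by apply: RepSum => t bt; exact: span_e.
case: Rc => g [d Hgd].
have g0 := frac_indep nz (c:=g).
have S0 : \sum_(b | good_basis alpha b) kscal r (g b) * phi alpha b = 0.
  rewrite -(evG nz Hcf g d) -ec; apply: ev_ext => t; by rewrite Hgd.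
exists d => t; rewrite Hgd /G big1 ?add0r // => b gb.
by rewrite (g0 S0 b gb) mul0r.
Qed.
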